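(* Let $\mu\in\mathbb{R}$ and let $\mathbf{A}\in\mathbb{R}^{m\times n}$ be a random matrix with independent rows. Suppose that for each $1\leq i\leq n$ the $i$-th column of $\mathbf{A}$ can be written as $\mathbf{a}^{col}_i=\mathbf{a}^{col}_{0,i}+\mu\mathbf{1}$, where $\mathbf{1}\in\mathbb{R}^m$ is the all-ones vector and $\mathbf{a}^{col}_{0,i}$ is a zero-mean random vector with independent components which is $1$-subgaussian, i.e. $\mathbb{E}[\exp(t\langle\mathbf{a}^{col}_{0,i},\mathbf{v}\rangle)]\leq\exp(t^2)$ for all $\mathbf{v}\in\mathbb{R}^m$ with $\|\mathbf{v}\|_2\leq 1$ and all $t\in\mathbb{R}$. Then $\mathbf{A}\in\mathcal{M}^+$ with probability at least $1-2n\exp\left(-\frac{\mu^2 m}{16}\right)$.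
   Context: $\mathcal{M}^+$ denotes the set of matrices $\mathbf{M}\in\mathbb{R}^{m\times n}$ for which there exists $\mathbf{t}\in\mathbb{R}^m$ with $\mathbf{M}^T\mathbf{t}>\mathbf{0}$ entrywise (i.e. the row span of $\mathbf{M}$ intersects the open positive orthant). *)

(* Defs.v *)
From HB Require Import structures.
From mathcomp Require Import all_boot all_order all_algebra.
From mathcomp Require Import all_classical all_reals all_analysis.
Set Implicit Arguments. Unset Strict Implicit. Unset Printing Implicit Defensive.
Import Order.TTheory GRing.Theory Num.Theory.
Local Open Scope classical_set_scope.
Local Open Scope ring_scope.

Definition Mplus (R : realType) (m n : nat) (M : 'M[R]_(m, n)) : Prop :=
  exists t : 'cV[R]_m, forall j : 'I_n, 0 < (M^T *m t) j ord0.

Definition gen_sigma d (T : measurableType d) (R : realType) (J : Type)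
  (X : J -> T -> R) : set (set T) :=
  <<s [set E | exists j B, measurable B /\ E = X j @^-1` B] >>.

(* Mutual independence of the groups (X i j)_{j in J}, indexed by i in a
   finite type I: the generated sigma-algebras are mutually independent
   (product rule for every choice of events, one per sigma-algebra; since
   each sigma-algebra contains setT this covers all subfamilies). *)
Definition indep_groups d (T : measurableType d) (R : realType)
  (P : probability T R) (I : finType) (J : Type) (X : I -> J -> T -> R) : Prop :=
  forall E : I -> set T, (forall i, gen_sigma (X i) (E i)) ->
    P (\bigcap_i E i) = (\prod_(i : I) P (E i))%E.

Definition indep_rvs d (T : measurableType d) (R : realType)
  (P : probability T R) (I : finType) (X : I -> T -> R) : Prop :=
  indep_groups P (fun i (_ : unit) => X i).

(* Main.v *)
Require Import Defs.
From HB Require Import structures.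
From mathcomp Require Import all_boot all_order all_algebra.
From mathcomp Require Import all_classical all_reals all_analysis.
From mathcomp Require Import ring lra.
Import Order.TTheory GRing.Theory Num.Theory.
Local Open Scope classical_set_scope.
Local Open Scope ring_scope.

Lemma mplusE (R : realType) m n (M : 'M[R]_(m, n)) :
  Mplus M <-> exists t : 'I_m -> R, forall j, 0 < \sum_k M k j * t k.
Proof.
split.
- move=> [t ht]; exists (fun k => t k ord0) => j.
  have := ht j; rewrite mxE.
  by under eq_bigr do rewrite mxE.
- move=> [t ht]; exists (\col_k t k) => j.
  rewrite mxE; under eq_bigr do rewrite !mxE; exact: ht.
Qed.

Lemma mplus_int (R : realType) m n (M : 'M[R]_(m, n)) :
  (exists t : 'I_m -> R, forall j, 0 < \sum_k M k j * t k) ->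
  exists z : {ffun 'I_m -> int}, forall j, 0 < \sum_k M k j * (z k)%:~R.
Proof.
move=> [t ht].
pose c j := \sum_k M k j * t k.
pose S j := \sum_k `|M k j|.
pose N := ((\max_j Num.truncn (S j / c j))%N).+1.
have hN j : S j < N%:R * c j.
  rewrite -ltr_pdivrMr ?ht //.
  apply: (lt_le_trans (truncnS_gt _)); rewrite ler_nat ltnS.
  by rewrite (bigD1 j) //= leq_maxl.
exists [ffun k => Num.floor (N%:R * t k)] => j.
under eq_bigr do rewrite ffunE.
have e : \sum_k M k j * (Num.floor (N%:R * t k))%:~R =
   N%:R * c j - \sum_k M k j * (N%:R * t k - (Num.floor (N%:R * t k))%:~R).
  rewrite /c mulr_sumr -sumrB; apply: eq_bigr => k _; ring.
have le : \sum_k M k j * (N%:R * t k - (Num.floor (N%:R * t k))%:~R) <= S j.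
  apply: ler_sum => k _.
  set x := N%:R * t k.
  have h0 := floor_le x.
  have h1 : x < (Num.floor x + 1)%:~R by rewrite -floor_lt_int ltzD1.
  rewrite intrD in h1.
  apply: (le_trans (ler_norm _)); rewrite normrM -[leRHS]mulr1.
  apply: ler_wpM2l => //; rewrite ger0_norm; lra.
rewrite e; have := hN j; lra.
Qed.

Section probstuff.
Context (R : realType) (d : measure_display) (T : measurableType d)
  (P : probability T R).

Lemma mlt (f : T -> R) : measurable_fun setT f -> measurable [set w | 0 < f w].
Proof.
move=> mf.
have := measurable_realfun.measurable_fun_ltr (measurable_cst (0:R)) mf measurableT (_ : measurable [set true]).
by rewrite setTI; apply.
Qed.

Lemma mle (f : T -> R) : measurable_fun setT f -> measurable [set w | f w <= 0].
Proof.
move=> mf.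
have := measurable_realfun.measurable_fun_ler mf (measurable_cst (0:R)) measurableT (_ : measurable [set true]).
by rewrite setTI; apply.
Qed.

Local Open Scope ereal_scope.
Lemma union_bound (I : Type) (s : seq I) (F : I -> set T) :
  (forall i, measurable (F i)) ->
  P (\big[setU/set0]_(i <- s) F i) <= \sum_(i <- s) P (F i).
Proof.
move=> mF; elim: s => [|i s IH]; first by rewrite !big_nil measure0.
rewrite !big_cons; apply: le_trans (measureU2 _ _ _) _ => //.
  exact: bigsetU_measurable.
by apply: leeD.
Qed.

End probstuff.

Theorem theorem5 (R : realType) (d : measure_display) (T : measurableType d)
  (P : probability T R) (m n : nat) (mu : R)
  (A : 'I_m -> 'I_n -> T -> R) (a0 : 'I_m -> 'I_n -> T -> R) :
  (* entries of A are random variables *)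
  (forall k j, measurable_fun setT (A k j)) ->
  (* A has independent rows *)
  indep_groups P A ->
  (* column decomposition a_i = a0_i + mu 1 *)
  (forall k i w, A k i w = a0 k i w + mu) ->
  (* each a0_i has independent components *)
  (forall i, indep_rvs P (fun k => a0 k i)) ->
  (* each a0_i has zero mean *)
  (forall i k, ('E_P[a0 k i] = 0)%E) ->
  (* each a0_i is 1-subgaussian *)
  (forall i (v : 'I_m -> R) (t : R), Num.sqrt (\sum_k v k ^+ 2) <= 1 ->
     (\int[P]_w (expR (t * \sum_k a0 k i w * v k))%:E <= (expR (t ^+ 2))%:E)%E) ->
  ((1 - 2 * n%:R * expR (- (mu ^+ 2 * m%:R / 16)))%:E
     <= P [set w | Mplus (\matrix_(k, j) A k j w)])%E.
Proof.
move=> mA _ hA _ _ hsg.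
have mS : measurable [set w | Mplus (\matrix_(k, j) A k j w)].
  have -> : [set w | Mplus (\matrix_(k, j) A k j w)] =
     \bigcup_(z : {ffun 'I_m -> int})
        [set w | forall j, 0 < \sum_k A k j w * (z k)%:~R].
    apply/seteqP; split => w /=.
    - move=> /mplusE /mplus_int [z hz]; exists z => // j.
      apply: lt_le_trans (hz j) _; rewrite le_eqVlt; apply/orP; left.
      by apply/eqP/eq_bigr => k _; rewrite mxE.
    - move=> [z _ hz]; apply/mplusE; exists (fun k => (z k)%:~R) => j.
      apply: lt_le_trans (hz j) _; rewrite le_eqVlt; apply/orP; left.
      by apply/eqP/eq_bigr => k _; rewrite mxE.
  apply: countable_bigcupT_measurable; first exact: countableP.
  move=> z.
  rewrite (_ : [set w | _] = \bigcap_(j in [set: 'I_n])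
       [set w | 0 < \sum_k A k j w * (z k)%:~R]); last first.
    by apply/seteqP; split => w /= h j; [move=> _; exact: h | exact: h].
  apply: fin_bigcap_measurable => // j _; apply: mlt.
  apply: measurable_sum => k; apply: measurable_realfun.measurable_funM ; [exact: mA | exact: measurable_cst].

pose B j := [set w | \sum_k A k j w * mu <= 0].
have ma0 k j : measurable_fun setT (a0 k j).
  rewrite (_ : a0 k j = fun w => A k j w - mu); last first.
    by apply: funext => w; rewrite hA; ring.
  by apply: measurable_realfun.measurable_funB; [exact: mA | exact: measurable_cst].
have mB j : measurable (B j).
  apply: mle; apply: measurable_sum => k.
  by apply: measurable_realfun.measurable_funM; [exact: mA | exact: measurable_cst].
pose U := \big[setU/set0]_(j : 'I_n) B j.
have mU : measurable U by apply: bigsetU_measurable => j _.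
have US : ~` U `<=` [set w | Mplus (\matrix_(k, j) A k j w)].
  move=> w nU; apply/mplusE; exists (fun _ => mu) => j.
  rewrite (eq_bigr (fun k => A k j w * mu)); last by move=> k _; rewrite mxE.
  rewrite ltNge; apply/negP => h; apply: nU.
  by rewrite /U (bigD1 j) //=; left.
have hB j : (P (B j) <= (expR (- (mu ^+ 2 * m%:R / 4)))%:E)%E.
  pose s := Num.sqrt (m%:R : R).
  pose t := mu * s / 2.
  pose v := fun _ : 'I_m => - s^-1.
  pose c := mu ^+ 2 * m%:R / 2.
  have hv : Num.sqrt (\sum_k v k ^+ 2) <= 1.
    rewrite /v; under eq_bigr do rewrite sqrrN exprVn.
    rewrite sumr_const card_ord sqr_sqrtr ?ler0n // -(mulr_natl ((m%:R : R)^-1)).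
    have [m0|m0] := eqVneq (m%:R : R) 0.
      by rewrite m0 mul0r sqrtr0.
    by rewrite mulfV // sqrtr1.
  have ht2 : t ^+ 2 = mu ^+ 2 * m%:R / 4.
    by rewrite /t !exprMn sqr_sqrtr ?ler0n //; field.
  pose Y w := t * \sum_k a0 k j w * v k.
  have hY w : B j w -> c <= Y w.
    rewrite /B /= => h.
    have e1 : \sum_k A k j w * mu = mu * (\sum_k a0 k j w) + mu ^+ 2 * m%:R.
      rewrite (eq_bigr (fun k => mu * a0 k j w + mu ^+ 2)); last first.
        by move=> k _; rewrite hA; ring.
      by rewrite big_split /= -mulr_sumr sumr_const card_ord mulr_natr.
    have e2 : Y w = - (mu / 2) * (\sum_k a0 k j w).
      rewrite /Y mulr_sumr mulr_sumr; apply: eq_bigr => k _.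
      have s0 : s != 0.
        by rewrite /s sqrtr_eq0 -ltNge ltr0n (leq_ltn_trans (leq0n k) (ltn_ord k)).
      rewrite /v /t; field.
      exact: s0.
    rewrite e2 /c; rewrite e1 in h; lra.
  have mY : measurable_fun setT Y.
    apply: measurable_realfun.measurable_funM; first exact: measurable_cst.
    apply: measurable_sum => k.
    by apply: measurable_realfun.measurable_funM; [exact: ma0 | exact: measurable_cst].
  have key : ((expR c)%:E * P (B j) <= (expR (t ^+ 2))%:E)%E.
    apply: le_trans (hsg j v t hv).
    have -> : ((expR c)%:E * P (B j) = \int[P]_w (expR c * \1_(B j) w)%:E)%E.
      rewrite (@integralZl_indic _ _ _ P _ measurableT (fun _ => B j) (expR c)) //=; last first.
        by rewrite ltNge expR_ge0.
      by rewrite integral_indic // setIT.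
    apply: ge0_le_integral => //.
    - apply/measurable_realfun.measurable_EFinP; apply: measurable_realfun.measurable_funM.
        exact: measurable_cst.
      exact: measurable_realfun.measurable_indic.
    - by apply/measurable_realfun.measurable_EFinP; apply: measurableT_comp => //; exact: measurable_realfun.measurable_expR.
    - move=> w _; rewrite lee_fin /indic.
      case: (boolP (w \in B j)) => [/set_mem h|_].
        by rewrite mulr1 ler_expR; exact: hY.
      by rewrite mulr0 expR_ge0.
  have pfin : P (B j) \is a fin_num.
    rewrite ge0_fin_numE ?measure_ge0 //.
    by apply: (le_lt_trans (probability_le1 P (mB j))); rewrite ltry.
  rewrite -(fineK pfin) in key *.
  rewrite -EFinM lee_fin in key; rewrite lee_fin.
  have E : expR c * expR (- (mu ^+ 2 * m%:R / 4)) = expR (t ^+ 2).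
    by rewrite -expRD ht2; congr expR; rewrite /c; lra.
  by rewrite -(ler_pM2l (expR_gt0 c)) E.

have hU : (P U <= (n%:R * expR (- (mu ^+ 2 * m%:R / 4)))%:E)%E.
  move: (@union_bound _ _ _ P _ (index_enum 'I_n) B mB) => H0; apply: (le_trans H0).
  apply: le_trans (_ : _ <= \sum_(j : 'I_n) (expR (- (mu ^+ 2 * m%:R / 4)))%:E)%E _.
    by apply: lee_sum => j _; exact: hB.
  by rewrite sumEFin sumr_const card_ord mulr_natl.
have pfin : P U \is a fin_num.
  rewrite ge0_fin_numE ?measure_ge0 //.
  by apply: (le_lt_trans (probability_le1 P mU)); rewrite ltry.
apply: le_trans (le_measure _ _ _ US); last 2 first.
- by rewrite inE; exact: measurableC.
- by rewrite inE.
rewrite [X in (_ <= X)%E](_ : _ = 1 - P U)%E; last exact: probability_setC.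
rewrite -(fineK pfin) in hU *.
rewrite lee_fin in hU; rewrite -EFinB lee_fin.
have e1 : expR (- (mu ^+ 2 * m%:R / 4)) <= expR (- (mu ^+ 2 * m%:R / 16)).
  rewrite ler_expR; have : 0 <= mu ^+ 2 * m%:R by rewrite mulr_ge0 ?sqr_ge0 ?ler0n.
  lra.
have e2 : 0 <= n%:R * expR (- (mu ^+ 2 * m%:R / 16)).
  by rewrite mulr_ge0 ?ler0n ?expR_ge0.
have e3 : n%:R * expR (- (mu ^+ 2 * m%:R / 4)) <= n%:R * expR (- (mu ^+ 2 * m%:R / 16)).
  by rewrite ler_wpM2l ?ler0n.
lra.
Qed.
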